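(* Let $p\geq 5$ be a prime and $r$ a positive integer such that $3$ does not divide $p^r+1$, and let $A(x)=x^{p^r+2}$ on $\mathbb{F}_{p^{2r}}$. For every $a\in\mathbb{F}_{p^{2r}}^*$, the function $\Pi_a(x)=2ax^{p^r+1}+a^{p^r}x^2$ on $\mathbb{F}_{p^{2r}}$ (which differs from the difference function $\Delta_{A,a}(x)=A(x+a)-A(x)$ by an affine function) is EA-equivalent to $x^2$.
   Context: An additive function on $\mathbb{F}_{p^n}$ is one satisfying $L(x+y)=L(x)+L(y)$ for all $x,y$; an affine function is an additive function plus a constant. Two functions $f_1,f_2:\mathbb{F}_{p^n}\to\mathbb{F}_{p^n}$ are extended affine (EA) equivalent if there exist affine functions $l_1,l_2,l_3$ with $l_1,l_2$ permutations of $\mathbb{F}_{p^n}$ such that $f_1(x)=l_1(f_2(l_2(x)))+l_3(x)$ for all $x$. *)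

(* Defs.v *)
From HB Require Import structures.
From mathcomp Require Import all_boot all_order all_algebra all_field.
Set Implicit Arguments. Unset Strict Implicit. Unset Printing Implicit Defensive.
Import GRing.Theory.
Local Open Scope ring_scope.

Definition additive_fun (F : finFieldType) (L : F -> F) : Prop :=
  forall x y, L (x + y) = L x + L y.

Definition affine_fun (F : finFieldType) (l : F -> F) : Prop :=
  exists (L : F -> F) (c : F), additive_fun L /\ forall x, l x = L x + c.

Definition EA_equiv (F : finFieldType) (f1 f2 : F -> F) : Prop :=
  exists (l1 l2 l3 : F -> F),
    affine_fun l1 /\ affine_fun l2 /\ affine_fun l3 /\
    bijective l1 /\ bijective l2 /\
    (forall x, f1 x = l1 (f2 (l2 x)) + l3 x).

(* Main.v *)
Require Import Defs.
From HB Require Import structures.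
From mathcomp Require Import all_boot all_order all_algebra all_field.
From mathcomp Require Import all_fingroup all_solvable.
From mathcomp Require Import zify ring.
Import GRing.Theory.
Local Open Scope ring_scope.

Lemma add_bij (F : finFieldType) (f : F -> F) :
  additive_fun f -> (forall z, f z = 0 -> z = 0) -> bijective f.
Proof.
move=> hf hk; apply: injF_bij => x y e.
have f0 : f 0 = 0.
  have : f 0 + f 0 = f 0 + 0 by rewrite -hf !addr0.
  by move/addrI.
have fN z : f (- z) = - f z.
  have : f z + f (- z) = f z + - f z by rewrite -hf !subrr.
  by move/addrI.
apply/eqP; rewrite -subr_eq0; apply/eqP; apply: hk.
by rewrite hf fN e subrr.
Qed.

Theorem mainTheorem2 (p r : nat) (F : finFieldType) :
  prime p -> (5 <= p)%N -> (0 < r)%N -> ~~ (3 %| p ^ r + 1)%N ->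
  #|F| = (p ^ (2 * r))%N ->
  forall a : F, a != 0 ->
    EA_equiv (fun x : F => 2%:R * a * x ^+ (p ^ r + 1) + a ^+ (p ^ r) * x ^+ 2)
             (fun x : F => x ^+ 2).
Proof.
move=> pp p5 r0 n3 cardF a a0.
set q := (p ^ r)%N in n3 *.
have pc : p \in [pchar F] := card_finPcharP cardF pp.
have qnat : [pchar F].-nat q by rewrite /q pnatX (pnatE _ pp) pc.
pose bar (x : F) := x ^+ q.
have barD x y : bar (x + y) = bar x + bar y := exprDn_pchar x y qnat.
have barM x y : bar (x * y) = bar x * bar y by rewrite /bar exprMn.
have barV x : bar (x^-1) = (bar x)^-1 by rewrite /bar exprVn.
have bar1 : bar 1 = 1 by rewrite /bar expr1n.
have qq : (q * q)%N = #|F| by rewrite cardF /q -expnD addnn mul2n.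
have barK x : bar (bar x) = x by rewrite /bar -exprM qq expf_card.
have q0 : (0 < q)%N by rewrite /q expn_gt0 (prime_gt0 pp).
have bar0 : bar 0 = 0 by rewrite /bar expr0n eqn0Ngt q0.
have barN x : bar (- x) = - bar x.
  have : bar x + bar (- x) = bar x + - bar x by rewrite -barD !subrr.
  by move/addrI.
have barX2 y : bar (y ^+ 2) = bar y ^+ 2 by rewrite /bar exprAC.
have n3q : ~~ (3 %| q)%N.
  rewrite /q Euclid_dvdX //; apply/negP => /andP [h _].
  case/primeP: pp => _ /(_ 3 h); lia.
have [k hq] : exists k, q = (3 * k + 1)%N.
  exists (q %/ 3)%N; lia.
have [u _ ou] : {u : {unit F} | u \in [set: {unit F}] & #[u]%g = 3%N}.
  apply: Cauchy => //; rewrite card_finField_unit -qq hq.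
  apply/dvdnP; exists (3 * k * k + 2 * k)%N; lia.
pose N := FinRing.uval u.
have hN3 : N ^+ 3 = 1.
  by rewrite /N -FinRing.val_unitX -ou expg_order.
have N1 : N != 1.
  apply/eqP => h; have : u = 1%g by apply: val_inj.
  by move=> u1; move: ou; rewrite u1 order1.
have hN : N ^+ 2 + N + 1 = 0.
  have : (N - 1) * (N ^+ 2 + N + 1) = 0.
    transitivity (N ^+ 3 - 1); first by ring.
    by rewrite hN3 subrr.
  by move/eqP; rewrite mulf_eq0 subr_eq0 (negbTE N1) /= => /eqP.
have barNN : bar N = N by rewrite /bar hq exprD exprM hN3 expr1n mul1r expr1.
have three0 : 3%:R != 0 :> F.
  by rewrite -(dvdn_pcharf pc); apply/negP => /(dvdn_leq (isT : (0 < 3)%N)); lia.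
have N2 : 1 - N ^+ 2 != 0.
  apply/eqP => h; move/eqP: three0; apply.
  transitivity ((N ^+ 2 - 1) * (N - 1) - (N - 2%:R) * (N ^+ 2 + N + 1)).
    by ring.
  by rewrite hN mulr0 subr0 -opprB h oppr0 mul0r.
have N1' : 1 - N != 0 by rewrite subr_eq0 eq_sym.
pose B := bar a.
have B0 : B != 0 by rewrite /B /bar expf_neq0.
pose c := a * (1 + N) / B.
have cbar : bar c = B * (1 + N) / a.
  by rewrite /c !barM barV barD bar1 barNN barK.
have cc : c * bar c = N.
  transitivity ((1 + N) ^+ 2).
    by rewrite cbar /c; field; rewrite B0 a0.
  transitivity (N + (N ^+ 2 + N + 1)); first by ring.
  by rewrite hN addr0.
pose al := B / (1 - N ^+ 2).
have al0 : al != 0 by rewrite /al mulf_neq0 ?invr_eq0.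
pose be := - al * c ^+ 2.
pose L2 := fun x : F => x + c * bar x.
pose L1 := fun z : F => al * z + be * bar z.
exists L1, L2, (fun _ => 0).
have L1a : additive_fun L1 by move=> x y; rewrite /L1 barD; ring.
have L2a : additive_fun L2 by move=> x y; rewrite /L2 barD; ring.
split; first by exists L1, 0; split => // x; rewrite addr0.
split; first by exists L2, 0; split => // x; rewrite addr0.
split; first by exists (fun _ => 0), 0; split => [x y|x]; rewrite addr0.
split.
  apply: add_bij => // z; rewrite /L1 /be => h.
  have h1 : z = c ^+ 2 * bar z.
    have : al * (z - c ^+ 2 * bar z) = 0 by rewrite -h; ring.
    by move/eqP; rewrite mulf_eq0 (negbTE al0) /= subr_eq0 => /eqP.
  have h2 : bar z = bar c ^+ 2 * z by rewrite {1}h1 barM barX2 barK.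
  have : (1 - N ^+ 2) * z = 0.
    rewrite -cc; transitivity (z - (c * bar c) ^+ 2 * z); first by ring.
    rewrite {1}h1 h2; ring.
  by move/eqP; rewrite mulf_eq0 (negbTE N2) /= => /eqP.
split.
  apply: add_bij => // z; rewrite /L2 => h.
  have h1 : z = - (c * bar z) by apply/eqP; rewrite -addr_eq0 h.
  have h2 : bar z = - (bar c * z) by rewrite {1}h1 barN barM barK.
  have : (1 - N) * z = 0.
    rewrite -cc; transitivity (z - (c * bar c) * z); first by ring.
    rewrite {1}h1 h2; ring.
  by move/eqP; rewrite mulf_eq0 (negbTE N1') /= => /eqP.
move=> x; rewrite addr0 /L1 /L2 barX2 barD barM barK.
have -> : x ^+ (q + 1) = bar x * x by rewrite addn1 exprSr.
set X := bar x; set cb := bar c.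
have k3 : al * c ^+ 2 + be = 0 by rewrite /be; ring.
have k1 : al + be * cb ^+ 2 = B.
  transitivity (al * (1 - (c * cb) ^+ 2)); first by rewrite /be; ring.
  by rewrite cc /al; field.
have k2 : al * c + be * cb = a.
  transitivity (al * c * (1 - c * cb)); first by rewrite /be; ring.
  by rewrite cc /al /c; field; rewrite B0 N2.
transitivity (x ^+ 2 * (al + be * cb ^+ 2) + 2%:R * x * X * (al * c + be * cb)
   + X ^+ 2 * (al * c ^+ 2 + be)); last by ring.
rewrite k1 k2 k3; have -> : a ^+ q = B by [].
ring.
Qed.
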